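(* Regard the vertex set of $\Upsilon_{[\mathcal Q^\flat]}$ as $\overline I^{\mathrm{tw},\flat}_\xi$. The quiver of $\widetilde B^{[\mathcal Q^\flat]}$ is obtained from $\Upsilon_{[\mathcal Q^\flat]}$ by the following four operations: - (B1) adding the arrows $(i,r)\to(i,r-2r_i)$ whenever $(i,r),(i,r-2r_i)\in\overline I^{\mathrm{tw},\flat}_\xi$; - (B2) removing all arrows of the form $(n,r)\to(n-1,r+1)$; - (B3) adding the arrows $(n,r)\to(n-1,r+3)$ whenever $(n,r)\in\overline I^{\mathrm{tw},\flat}_\xi$ and $(n-1,r+3)\in(\overline I^{\mathrm{tw},\flat}_\xi)_e$; - (B4) removing the arrows between vertices in $(\overline I^{\mathrm{tw},\flat}_\xi)_f$. More explicitly, the arrow set of the quiver of $\widetilde B^{[\mathcal Q^\flat]}$ is the union of: 1. $\{(i,r)\to(i,r-2r_i)\mid (i,r),(i,r-2r_i)\in\overline I^{\mathrm{tw},\flat}_\xi\}$; 2. $\{(i,r)\to(j,r+2)\mid i,j\le n-1,\ |i-j|=1,\ (i,r)\in\overline I^{\mathrm{tw},\flat}_\xi,\ (j,r+2)\in(\overline I^{\mathrm{tw},\flat}_\xi)_e\}$; 3. $\{(n-1,r)\to(n,r+1)\mid (n-1,r)\in\overline I^{\mathrm{tw},\flat}_\xi,\ (n,r+1)\in(\overline I^{\mathrm{tw},\flat}_\xi)_e\}$; 4. $\{(n,r)\to(n-1,r+3)\mid (n,r)\in\overline I^{\mathrm{tw},\flat}_\xi,\ (n-1,r+3)\in(\overline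 I^{\mathrm{tw},\flat}_\xi)_e\}$.
   Context: Fix $n\ge2$, and put $r_i=2$ for $1\le i\le n-1$ and $r_n=1$. Twisted AR quiver. $\mathcal Q$ is a quiver with underlying graph of type $\mathrm A_{2n-2}$, and $\xi$ a height function ($\xi(j)=\xi(i)+1$ for arrows $i\to j$). Let $\widehat I_\xi=\{(i,p):1\le i\le2n-2,\ p\equiv\xi(i)\ \mathrm{mod}\ 2,\ \xi(2n-1-i)-(2n-1)<p\le\xi(i)\}$, the vertex set of the AR quiver $\Gamma_{\mathcal Q}$, whose arrows are $(j,p-1)\to(i,p)$ for $|i-j|=1$ with both ends in $\widehat I_\xi$. Let $\phi(i,p)=(i,p)$ for $i\le n-1$ and $(i+1,p)$ for $i\ge n$. For $\flat\in\{>,<\}$, $\Upsilon_{[\mathcal Q^\flat]}$ has vertex set $\widehat I^{\mathrm{tw},\flat}_\xi$ consisting of: - $\phi(\widehat I_\xi)$; - a vertex $(n,p-\frac12)$ for each arrow $(j,p-1)\to(i,p)$ of $\Gamma_{\mathcal Q}$ with $\{i,j\}=\{n-1,n\}$; - one extra vertex $(n,r_M+\frac12)$ ($\flat={>}$) or $(n,r_m-\frac12)$ ($\flat={<}$), where $r_M$, $r_m$ are the max and min of $\{p:(n-1,p)\text{ or }(n,p)\in\widehat I_\xi\}$. Its arrows are: - $\phi(j,p-1)\to\phi(i,p)$ for arrows of $\Gamma_{\mathcal Q}$ with $\{i,j\}\ne\{n-1,n\}$; - $\phi(j,p-1)\to(n,p-\frac12)\to\phi(i,p)$ for arrows with $\{i,j\}=\{n-1,n\}$;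 - for $\flat={>}$, $v_M\to(n,r_M+\frac12)$, and for $\flat={<}$, $(n,r_m-\frac12)\to v_m$, where $v_M$ ($v_m$) is the vertex of $\phi(\widehat I_\xi)$ with first coordinate in $\{n-1,n+1\}$ and second coordinate $r_M$ ($r_m$). Vertices are relabelled by $(\imath,s)\mapsto(\imath,2s)$ ($\imath\le n$), $(2n-\imath,2s)$ ($\imath>n$), with image $\overline I^{\mathrm{tw},\flat}_\xi$. The residue of a vertex $(\imath,s)$ is $\imath$. Exchange matrix. Listing the residues of the vertices by decreasing second coordinate $s$ gives a reduced word $(\imath_1,\dots,\imath_\ell)$ of the longest element of $W(\mathrm A_{2n-1})$; positions $k$ are identified with vertices. For a position $k$, $k^+$ is the next position $>k$ with the same letter, or $\ell+1$ if none. Let $J_f=\{k:k^+=\ell+1\}$ and $J_e$ its complement; $(\overline I^{\mathrm{tw},\flat}_\xi)_e$ and $(\overline I^{\mathrm{tw},\flat}_\xi)_f$ are the corresponding vertex subsets. Let $(a_{\imath\jmath})$ be the type $\mathrm A_{2n-1}$ Cartan matrix. $\widetilde B^{[\mathcal Q^\flat]}=(b_{st})_{s\in J,t\in J_e}$ has entries: - $b_{st}=1$ if $t=s^+$; - $b_{st}=a_{\imath_s\imath_t}$ if $s<t<s^+<t^+$; - $b_{st}=-1$ if $t^+=s$; - $b_{st}=-a_{\imath_s\imath_t}$ if $t<s<t^+<s^+$; - $b_{st}=0$ otherwise. Its quiver has vertex set $J$ and an arrow $\beta\to\beta'$ whenever $b_{\beta\beta'}=1$ or $b_{\beta'\beta}=-1$.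 *)

(* Defs.v *)
(* CONVENTIONS:
   - vertices are pairs (i, t) : nat * int;  for vertices of Upsilon the
     second component t is TWICE the (half-)integer second coordinate s,
     so that (i, s) is represented by (i, 2 s).  *)
From mathcomp Require Import all_boot all_order all_algebra.
Import Order.TTheory GRing.Theory Num.Theory.

Set Implicit Arguments.
Unset Strict Implicit.
Unset Printing Implicit Defensive.

Local Open Scope ring_scope.

Definition vtx := (nat * int)%type.

Inductive flat := FlatGt | FlatLt.

Section Twisted.
Variables (n : nat) (xi : nat -> int).

(** vertex set \widehat I_xi of the AR quiver Gamma_Q (type A_{2n-2}) *)
Definition hatI (i : nat) (p : int) : Prop :=
  [/\ (1 <= i)%N, (i <= 2 * n - 2)%N, (p == xi i %[mod 2])%Z,
      xi (2 * n - 1 - i)%N - (2 * n - 1)%:Z < p & p <= xi i].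

Definition GammaArrow (j : nat) (q : int) (i : nat) (p : int) : Prop :=
  [/\ q = p - 1, (i = j.+1 \/ j = i.+1), hatI j q & hatI i p].

Definition midpair (i j : nat) : Prop :=
  (i = n.-1 /\ j = n) \/ (i = n /\ j = n.-1).

Definition phi (i : nat) : nat := if (i <= n.-1)%N then i else i.+1.

Definition midS (p : int) : Prop := hatI n.-1 p \/ hatI n p.
Definition isMaxMid (r : int) : Prop := midS r /\ forall p, midS p -> p <= r.
Definition isMinMid (r : int) : Prop := midS r /\ forall p, midS p -> r <= p.

Definition phiV (v : vtx) : Prop := exists i p, hatI i p /\ v = (phi i, 2 * p).

(** vertex set of Upsilon_[Q^flat] (doubled second coordinate) *)
Definition TwV (fl : flat) (v : vtx) : Prop :=
  [\/ phiV v,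
      (exists j i p, [/\ GammaArrow j (p - 1) i p, midpair i j & v = (n, 2 * p - 1)])
    | match fl with
      | FlatGt => exists r, isMaxMid r /\ v = (n, 2 * r + 1)
      | FlatLt => exists r, isMinMid r /\ v = (n, 2 * r - 1)
      end].

Definition TwA (fl : flat) (v w : vtx) : Prop :=
  [\/ (exists j q i p, [/\ GammaArrow j q i p, ~ midpair i j,
                          v = (phi j, 2 * q) & w = (phi i, 2 * p)]),
      (exists j q i p, [/\ GammaArrow j q i p, midpair i j &
          ((v = (phi j, 2 * q) /\ w = (n, 2 * p - 1)) \/
           (v = (n, 2 * p - 1) /\ w = (phi i, 2 * p)))])
    | match fl with
      | FlatGt => exists r, [/\ isMaxMid r, phiV v, (v.1 = n.-1 \/ v.1 = n.+1),
                               v.2 = 2 * r & w = (n, 2 * r + 1)]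
      | FlatLt => exists r, [/\ isMinMid r, phiV w, (w.1 = n.-1 \/ w.1 = n.+1),
                               w.2 = 2 * r & v = (n, 2 * r - 1)]
      end].

Definition relab (v : vtx) : vtx :=
  (if (v.1 <= n)%N then v.1 else (2 * n - v.1)%N, v.2).

Definition Ibar (fl : flat) (v : vtx) : Prop := exists x, TwV fl x /\ relab x = v.

(** a listing of the vertices of Upsilon by decreasing second coordinate
    (ties broken arbitrarily); its residues form the word (i_1,...,i_l) *)
Definition IsListing (fl : flat) (L : seq vtx) : Prop :=
  [/\ uniq L, (forall x, (x \in L) <-> TwV fl x)
    & sorted (fun a b : vtx => b.2 <= a.2) L].

End Twisted.

Section Exchange.
Variable L : seq vtx.

(** positions are 0-based: k < size L;  letter = residue *)
Definition letter (k : nat) : nat := (nth (0%N, 0) L k).1.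

(** k^+ ; "none" is encoded by size L (= l, i.e. l+1 in 1-based terms) *)
Definition nextpos (k : nat) : nat :=
  (k.+1 + find (fun x : vtx => x.1 == letter k) (drop k.+1 L))%N.

Definition inJe (k : nat) : bool := (nextpos k < size L)%N.

Definition cartanA (i j : nat) : int :=
  if i == j then 2 else if (i == j.+1) || (j == i.+1) then -1 else 0.

Definition bmat (s t : nat) : int :=
  if t == nextpos s then 1
  else if [&& (s < t)%N, (t < nextpos s)%N & (nextpos s < nextpos t)%N]
       then cartanA (letter s) (letter t)
  else if nextpos t == s then -1
  else if [&& (t < s)%N, (s < nextpos t)%N & (nextpos t < nextpos s)%N]
       then - cartanA (letter s) (letter t)
  else 0.

(** quiver of B~ (rows J, columns J_e) on positions *)
Definition posArrow (b b' : nat) : Prop :=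
  [/\ (b < size L)%N, (b' < size L)%N &
      ((inJe b' /\ bmat b b' = 1) \/ (inJe b /\ bmat b' b = -1))].

End Exchange.

Section Transport.
Variables (n : nat) (L : seq vtx).

Definition vat (k : nat) : vtx := relab n (nth (0%N, 0) L k).

Definition QB (v w : vtx) : Prop :=
  exists k k', [/\ posArrow L k k', vat k = v & vat k' = w].

Definition Ibar_e (v : vtx) : Prop :=
  exists k, [/\ (k < size L)%N, inJe L k & vat k = v].
Definition Ibar_f (v : vtx) : Prop :=
  exists k, [/\ (k < size L)%N, ~~ inJe L k & vat k = v].

Definition rB (i : nat) : int := if i == n then 1 else 2.

Variables (xi : nat -> int) (fl : flat).

Definition arrB1 (v w : vtx) : Prop :=
  [/\ w.1 = v.1, w.2 = v.2 - 2 * rB v.1, Ibar n xi fl v & Ibar n xi fl w].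
Definition arr2 (v w : vtx) : Prop :=
  [/\ ((v.1 <= n.-1)%N /\ (w.1 <= n.-1)%N), (v.1 = w.1.+1 \/ w.1 = v.1.+1),
      w.2 = v.2 + 2, Ibar n xi fl v & Ibar_e w].
Definition arr3 (v w : vtx) : Prop :=
  [/\ v.1 = n.-1, w = (n, v.2 + 1), Ibar n xi fl v & Ibar_e w].
Definition arrB3 (v w : vtx) : Prop :=
  [/\ v.1 = n, w = (n.-1, v.2 + 3), Ibar n xi fl v & Ibar_e w].

Definition UpsA (v w : vtx) : Prop :=
  exists x y, [/\ TwA n xi fl x y, relab n x = v & relab n y = w].

Definition formB2 (v w : vtx) : Prop := v.1 = n /\ w = (n.-1, v.2 + 1).

Definition ModifiedArrows (v w : vtx) : Prop :=
  (((UpsA v w \/ arrB1 v w) /\ ~ formB2 v w) \/ arrB3 v w)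
  /\ ~ (Ibar_f v /\ Ibar_f w).

Definition ExplicitArrows (v w : vtx) : Prop :=
  [\/ arrB1 v w, arr2 v w, arr3 v w | arrB3 v w].

End Transport.

(* Main.v *)
Require Import Defs.
From mathcomp Require Import all_boot all_order all_algebra.
From mathcomp Require Import zify.
From Stdlib Require Import Classical ClassicalEpsilon.
Import Order.TTheory GRing.Theory Num.Theory.
Local Open Scope ring_scope.
Set Implicit Arguments.
Unset Strict Implicit.


Lemma modz2P (p q : int) : (p == q %[mod 2])%Z <-> exists t : int, p = q + 2 * t.
Proof.
rewrite eqz_mod_dvd; split.
  by move/dvdzP=> [k hk]; exists k; lia.
by move=> [t ht]; apply/dvdzP; exists t; lia.
Qed.

Lemma hatI_iff n xi i p : hatI n xi i p <->
  [/\ (1 <= i)%N, (i <= 2 * n - 2)%N, (exists t : int, p = xi i + 2 * t),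
      xi (2 * n - 1 - i)%N - (2 * n - 1)%:Z < p & p <= xi i].
Proof.
rewrite /hatI; split; case=> h1 h2 h3 h4 h5; split=> //; by apply/modz2P.
Qed.

Definition Hxi n (xi : nat -> int) := forall i : nat, (1 <= i)%N -> (i < 2 * n - 2)%N ->
   xi i.+1 = xi i + 1 \/ xi i = xi i.+1 + 1.

Lemma Hxi_of n xi orient : (forall i : nat, (1 <= i)%N -> (i < 2 * n - 2)%N ->
           if orient i then xi i.+1 = xi i + 1 else xi i = xi i.+1 + 1) -> Hxi n xi.
Proof. move=> h i h1 h2; move: (h i h1 h2); case: (orient i); tauto. Qed.

Lemma par1 n xi : Hxi n xi -> forall i, (1 <= i)%N -> (i <= 2 * n - 2)%N ->
  exists t : int, xi i = xi 1%N + (i%:Z - 1) + 2 * t.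
Proof.
move=> H; elim=> [//|i IH] _ hi.
case: (posnP i) => [->|ip]. by exists 0; lia.
have [t ht] := IH ip (ltnW hi).
case: (H i ip hi) => e.
  by exists t; lia.
by exists (t - 1); lia.
Qed.

Lemma par n xi : Hxi n xi -> forall i j, (1 <= i)%N -> (i <= 2 * n - 2)%N ->
  (1 <= j)%N -> (j <= 2 * n - 2)%N ->
  exists t : int, xi i - xi j = i%:Z - j%:Z + 2 * t.
Proof.
move=> H i j h1 h2 h3 h4.
have [t1 e1] := par1 H h1 h2; have [t2 e2] := par1 H h3 h4.
by exists (t1 - t2); lia.
Qed.

Lemma adjx n xi : Hxi n xi -> forall i, (1 <= i)%N -> (i < 2 * n - 2)%N ->
  xi i.+1 - xi i = 1 \/ xi i.+1 - xi i = -1.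
Proof. move=> H i h1 h2; case: (H i h1 h2); lia. Qed.


Lemma int_par (z : int) : exists t : int, z = 2 * t \/ z = 2 * t + 1.
Proof.
exists (z %/ 2)%Z; have := divz_eq z 2; have := modz_ge0 z (isT : (2:int) != 0).
have := ltz_pmod z (isT : (0 < (2:int))). lia.
Qed.

Definition hk n k := if (k < n)%N then k else k.-1.
Definition Mx n (xi : nat -> int) : int := if xi n.-1 < xi n then xi n else xi n.-1.
Definition ee fl : int := if fl is FlatGt then 1 else 0.
Definition hh n : int := 2 * n%:Z - 1.

Lemma hatInm1 n xi p : (2 <= n)%N -> hatI n xi n.-1 p <->
  (exists t : int, p = xi n.-1 + 2 * t) /\ xi n - hh n < p /\ p <= xi n.-1.
Proof.
move=> hn; rewrite hatI_iff /hh.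
have -> : (2 * n - 1 - n.-1)%N = n by lia.
split. by case=> *; split=> //; split=> //; lia.
by case=> h1 [h2 h3]; split=> //; lia.
Qed.

Lemma hatIn n xi p : (2 <= n)%N -> hatI n xi n p <->
  (exists t : int, p = xi n + 2 * t) /\ xi n.-1 - hh n < p /\ p <= xi n.
Proof.
move=> hn; rewrite hatI_iff /hh.
have -> : (2 * n - 1 - n)%N = n.-1 by lia.
split. by case=> *; split=> //; split=> //; lia.
by case=> h1 [h2 h3]; split=> //; lia.
Qed.

Lemma adjn n xi : (2 <= n)%N -> Hxi n xi -> xi n - xi n.-1 = 1 \/ xi n - xi n.-1 = -1.
Proof.
move=> hn H; have := adjx H (i:=n.-1); rewrite prednK; last by lia.
apply; lia.
Qed.

Lemma Mx_cases n xi : (2 <= n)%N -> Hxi n xi ->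
  (Mx n xi = xi n /\ xi n.-1 = Mx n xi - 1) \/ (Mx n xi = xi n.-1 /\ xi n = Mx n xi - 1).
Proof.
move=> hn H; have := adjn hn H; rewrite /Mx.
case: ifP => h; last have h2 : xi n <= xi n.-1 by rewrite leNgt h.
  by move/idP: h; lia.
lia.
Qed.

Lemma midS_iff n xi p : (2 <= n)%N -> Hxi n xi ->
  midS n xi p <-> Mx n xi - hh n + 1 <= p /\ p <= Mx n xi.
Proof.
move=> hn H; rewrite /midS hatInm1 // hatIn // /hh.
have hA := Mx_cases hn H.
have [t ht] := int_par (p - xi n).
split.
  case=> [[[s hs] [h1 h2]]|[[s hs] [h1 h2]]]; lia.
move=> [h1 h2].
case: ht => ht.
  right; split; [by exists t; lia| lia].
left; split; last lia.
case: hA => [[e1 e2]|[e1 e2]]; [exists (t+1)|exists t]; lia.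
Qed.

Lemma isMax_iff n xi r : (2 <= n)%N -> Hxi n xi -> isMaxMid n xi r <-> r = Mx n xi.
Proof.
move=> hn H; rewrite /isMaxMid; split.
  case=> /(midS_iff _ hn H) h1 h2.
  have := h2 (Mx n xi); rewrite midS_iff // /hh; lia.
move=> ->; split; first by rewrite midS_iff // /hh; lia.
by move=> p; rewrite midS_iff //; lia.
Qed.

Lemma isMin_iff n xi r : (2 <= n)%N -> Hxi n xi -> isMinMid n xi r <-> r = Mx n xi - hh n + 1.
Proof.
move=> hn H; rewrite /isMinMid; split.
  case=> /(midS_iff _ hn H) h1 h2.
  have := h2 (Mx n xi - hh n + 1); rewrite midS_iff //; lia.
move=> ->; split; first by rewrite midS_iff // /hh; lia.
by move=> p; rewrite midS_iff //; lia.
Qed.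

Definition Pn n xi fl (c : int) := exists q : int,
  c = 2 * q + 1 /\ Mx n xi - hh n + ee fl <= q /\ q <= Mx n xi - 1 + ee fl.

Lemma hatI_range n xi i p : hatI n xi i p -> (1 <= i)%N /\ (i <= 2 * n - 2)%N.
Proof. by case. Qed.

Lemma midpair_mid n xi j i p : (2 <= n)%N -> Hxi n xi ->
  GammaArrow n xi j (p - 1) i p -> midpair n i j -> midS n xi (p - 1) /\ midS n xi p.
Proof.
move=> hn H [_ _ h1 h2] [[? ?]|[? ?]]; subst; rewrite /midS; tauto.
Qed.

Lemma mid_of n xi q : (2 <= n)%N -> Hxi n xi -> midS n xi q -> midS n xi (q + 1) ->
  exists j i, GammaArrow n xi j q i (q + 1) /\ midpair n i j.
Proof.
move=> hn H; rewrite /midS !hatInm1 // !hatIn //.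
case=> [[[s hs] h1]|[[s hs] h1]] [[[s' hs'] h2]|[[s' hs'] h2]].
- exfalso; lia.
- exists n.-1, n; split; last by right; split.
  split; first by lia.
  + left; lia.
  + by rewrite hatInm1 //; split; [exists s|].
  + by rewrite hatIn //; split; [exists s'|].
- exists n, n.-1; split; last by left; split.
  split; first by lia.
  + right; lia.
  + by rewrite hatIn //; split; [exists s|].
  + by rewrite hatInm1 //; split; [exists s'|].
- exfalso; lia.
Qed.

Lemma TwV_iff n xi fl k c : (2 <= n)%N -> Hxi n xi ->
  TwV n xi fl (k, c) <->
  (k <> n /\ exists p, c = 2 * p /\ hatI n xi (hk n k) p) \/ (k = n /\ Pn n xi fl c).
Proof.
move=> hn H; split.
  case.
  - move=> [i [p [hI [-> ->]]]]; left.
    have [r1 r2] := hatI_range hI.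
    rewrite /phi /hk; case: ifP => hi.
      split; first by lia.
      by exists p; split => //; have -> : (i < n)%N by lia.
    split; first by lia.
    by exists p; split => //; have -> : (i.+1 < n)%N = false by lia.
  - move=> [j [i [p [hG hm [-> ->]]]]]; right; split => //.
    have [/(midS_iff _ hn H) h1 /(midS_iff _ hn H) h2] := midpair_mid hn H hG hm.
    exists (p - 1); split; first by lia.
    rewrite /ee; case: fl; rewrite /hh in h1 h2 *; lia.
  - case: fl => [[r [/(isMax_iff _ hn H) -> [-> ->]]]|[r [/(isMin_iff _ hn H) -> [-> ->]]]]; right; split => //.
      by exists (Mx n xi); rewrite /ee /hh; lia.
    by exists (Mx n xi - hh n); rewrite /ee /hh; lia.
case=> [[hkn [p [-> hI]]]|[-> [q [-> [h1 h2]]]]].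
  constructor 1; exists (hk n k), p; split => //.
  have [r1 r2] := hatI_range hI.
  move: r1 r2; rewrite /phi /hk; case: ifP => hkk r1 r2.
    by have -> : (k <= n.-1)%N by lia.
  have -> : (k.-1 <= n.-1)%N = false by lia.
  by rewrite prednK //; lia.
have [hq1|hq1] : (Mx n xi - hh n + 1 <= q /\ q <= Mx n xi - 1) \/
                 (q = if fl is FlatGt then Mx n xi else Mx n xi - hh n).
    by case: fl h1 h2; rewrite /ee; lia.
  constructor 2.
  have [j [i [hG hm]]] := @mid_of n xi q hn H ltac:(rewrite midS_iff //; lia)
     ltac:(rewrite midS_iff //; lia).
  exists j, i, (q + 1); rewrite addrK; split => //.
  congr (_, _); lia.
constructor 3.
move: hq1; case: fl h1 h2 => h1 h2 ->.
  by exists (Mx n xi); split; first by rewrite isMax_iff.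
exists (Mx n xi - hh n + 1); split; first by rewrite isMin_iff.
congr (_, _); lia.
Qed.


Definition dd n (k : nat) : int := if k == n then 2 else 4.

Lemma hk_range n xi k p : k <> n -> hatI n xi (hk n k) p ->
  ((1 <= k)%N /\ (k < n)%N /\ hk n k = k) \/ ((n < k)%N /\ (k <= 2 * n - 1)%N /\ hk n k = k.-1).
Proof.
move=> kn /hatI_range; rewrite /hk; case: ifP => h [h1 h2]; [left|right]; lia.
Qed.

Lemma P_gap n xi fl k c c' : (2 <= n)%N -> Hxi n xi ->
  TwV n xi fl (k, c) -> TwV n xi fl (k, c') -> c' < c -> c' <= c - dd n k.
Proof.
move=> hn H; rewrite !TwV_iff // /dd.
case=> [[kn [p [-> /hatI_iff [_ _ [t ht] _ _]]]]|[-> [q [-> _]]]];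
case=> [[kn' [p' [-> /hatI_iff [_ _ [t' ht'] _ _]]]]|[kn' [q' [-> _]]]] //.
- have -> : (k == n) = false by apply/eqP.
  lia.
- have -> : (n == n) = true by apply/eqP.
  lia.
Qed.

Lemma P_contig n xi fl k c c' : (2 <= n)%N -> Hxi n xi ->
  TwV n xi fl (k, c) -> TwV n xi fl (k, c') -> c' < c -> TwV n xi fl (k, c - dd n k).
Proof.
move=> hn H; rewrite !TwV_iff // /dd.
case=> [[kn [p [-> /hatI_iff [a1 a2 [t ht] a4 a5]]]]|[-> [q [-> [q1 q2]]]]];
case=> [[kn' [p' [-> /hatI_iff [_ _ [t' ht'] b4 b5]]]]|[kn' [q' [-> [q1' q2']]]]] //.
- have -> : (k == n) = false by apply/eqP.
  move=> hlt; left; split => //; exists (p - 2); split; first by lia.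
  apply/hatI_iff; split => //; [exists (t - 1)|..]; lia.
- have -> : (n == n) = true by apply/eqP.
  move=> hlt; right; split => //; exists (q - 1); lia.
Qed.

Definition adjb (k k' : nat) := (k == k'.+1) || (k' == k.+1).

Lemma cartan_adj k k' : (cartanA k k' == -1) = adjb k k'.
Proof.
rewrite /cartanA /adjb; case: ifP => [/eqP ->|_].
  have -> : (k' == k'.+1) = false by lia.
  by [].
by case: ifP.
Qed.

Lemma P_adj n xi fl k k' c : (2 <= n)%N -> Hxi n xi ->
  TwV n xi fl (k, c) -> TwV n xi fl (k', c) -> adjb k k' -> False.
Proof.
move=> hn H; rewrite !TwV_iff //.
wlog: k k' / k' == k.+1.
  move=> W h1 h2 /orP [e|e].
    by apply: (W k' k e h2 h1); rewrite /adjb e orbT.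
  by apply: (W k k' e h1 h2); rewrite /adjb e orbT.
move=> /eqP e; subst k'.
case=> [[kn [p [-> hI]]]|[-> [q [-> _]]]];
case=> [[kn' [p' [e hI']]]|[kn' [q' [e _]]]] // _; try lia.
have [t ht] : exists t : int, xi (hk n k.+1) - xi (hk n k) = 1 + 2 * t \/ xi (hk n k.+1) - xi (hk n k) = -1 + 2 * t.
  case: (hk_range kn hI) => [[r1 [r2 ->]]|[r1 [r2 ->]]];
  case: (hk_range kn' hI') => [[r1' [r2' ->]]|[r1' [r2' ->]]]; try lia.
    by exists 0; move: (adjx H r1 ltac:(lia)); lia.
  by exists 0; rewrite /=; move: (adjx H (i := k.-1) ltac:(lia) ltac:(lia)); rewrite prednK; lia.
move: hI hI' => /hatI_iff [_ _ [s hs] _ _] /hatI_iff [_ _ [s' hs'] _ _]; lia.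
Qed.

Lemma P_res n xi fl k c : (2 <= n)%N -> Hxi n xi ->
  TwV n xi fl (k, c) -> (1 <= k)%N /\ (k <= 2 * n - 1)%N.
Proof.
move=> hn H; rewrite TwV_iff //; case=> [[kn [p [_ hI]]]|[-> _]]; last lia.
case: (hk_range kn hI); lia.
Qed.

Lemma P_relab n xi fl x y : (2 <= n)%N -> Hxi n xi ->
  TwV n xi fl x -> TwV n xi fl y -> relab n x = relab n y -> x = y.
Proof.
move=> hn H; case: x => k c; case: y => k' c' hx hy.
have [r1 r2] := P_res hn H hx; have [r1' r2'] := P_res hn H hy.
move: hx hy; rewrite !TwV_iff // /relab /=.
move=> hx hy [].
have keyp : forall a b p p', (a < n)%N -> (n < b)%N -> a = (2 * n - b)%N -> 
   hatI n xi (hk n a) p -> hatI n xi (hk n b) p' -> 2 * p = 2 * p' -> False.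
  move=> a b p p' ha hb e hI hI' ep.
  have e1 : hk n a = a by rewrite /hk ha.
  have e2 : hk n b = (2 * n - 1 - a)%N.
    have [_ rb] := hatI_range hI'; move: rb.
    rewrite /hk. have -> : (b < n)%N = false by lia. lia.
  move: hI hI'; rewrite e1 e2 => /hatI_iff [a1 a2 [s hs] _ _] /hatI_iff [b1 b2 [s' hs'] _ _].
  have [t ht] := par H a1 a2 b1 b2; lia.
case: ifP => h1; case: ifP => h2 e1 e2; subst c'.
- by subst.
- exfalso; case: hx => [[kn [p [ep hI]]]|[kn _]]; last lia.
  case: hy => [[kn' [p' [ep' hI']]]|[kn' _]]; last lia.
  by apply: (keyp k k' p p') => //; lia.
- exfalso; case: hx => [[kn [p [ep hI]]]|[kn _]]; last lia.
  case: hy => [[kn' [p' [ep' hI']]]|[kn' _]]; last lia.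
  by apply: (keyp k' k p' p) => //; lia.
- have: k = k' by lia. by move=> ->.
Qed.


Definition Bm (s t ns nt : nat) (c : int) : int :=
  if t == ns then 1
  else if [&& (s < t)%N, (t < ns)%N & (ns < nt)%N] then c
  else if nt == s then -1
  else if [&& (t < s)%N, (s < nt)%N & (nt < ns)%N] then - c
  else 0.

Lemma Bchar (l b b' nb nb' : nat) (c : int) : (b < nb)%N -> (b' < nb')%N -> (nb <= l)%N -> (nb' <= l)%N ->
  (b < l)%N -> (b' < l)%N -> (c = 2 \/ c = -1 \/ c = 0) ->
  ((nb' < l)%N /\ Bm b b' nb nb' c = 1 \/ (nb < l)%N /\ Bm b' b nb' nb c = -1) <->
  (b' = nb \/ (c = -1 /\ (b' < b)%N /\ (b < nb')%N /\ (nb' < nb)%N)).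
Proof.
move=> h1 h2 h3 h4 h5 h6 hc; rewrite /Bm.
case: (b' =P nb) => e1; case: (b =P nb') => e2; case: (nb' =P b) => e3; case: (nb =P b') => e4;
rewrite ?andbT;
case: (boolP [&& (b < b')%N, (b' < nb)%N & (nb < nb')%N]);
case: (boolP [&& (b' < b)%N, (b < nb')%N & (nb' < nb)%N]) => /=; lia.
Qed.

Lemma cartan_vals i j : cartanA i j = 2 \/ cartanA i j = -1 \/ cartanA i j = 0.
Proof. rewrite /cartanA; case: ifP => _; first by left. case: ifP => _; [right; left|right; right]; by []. Qed.

Lemma cartan_sym i j : cartanA i j = cartanA j i.
Proof.
rewrite /cartanA; case: ifP => [/eqP ->|h]; first by rewrite eq_refl.
have -> : (j == i) = false by apply/negbTE; rewrite eq_sym h.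
by rewrite orbC.
Qed.

Lemma cartan_m1 i j : (cartanA i j = -1) <-> adjb i j.
Proof. by rewrite -cartan_adj; split => [->|/eqP]. Qed.

Lemma nextpos_gt L s : (s < nextpos L s)%N.
Proof. by rewrite /nextpos; lia. Qed.

Lemma nextpos_le L s : (s < size L)%N -> (nextpos L s <= size L)%N.
Proof.
move=> hs; rewrite /nextpos; have := find_size (fun x : vtx => x.1 == letter L s) (drop s.+1 L).
rewrite size_drop; lia.
Qed.

Lemma posArrow_iff L b b' : posArrow L b b' <->
  [/\ (b < size L)%N, (b' < size L)%N &
     (b' = nextpos L b \/ (cartanA (letter L b) (letter L b') = -1 /\
        (b' < b)%N /\ (b < nextpos L b')%N /\ (nextpos L b' < nextpos L b)%N))].
Proof.
have E1 : bmat L b b' = Bm b b' (nextpos L b) (nextpos L b') (cartanA (letter L b) (letter L b')) by [].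
have E2 : bmat L b' b = Bm b' b (nextpos L b') (nextpos L b) (cartanA (letter L b) (letter L b')).
  by rewrite cartan_sym.
rewrite /posArrow /inJe E1 E2; split.
  case=> h1 h2 h3; split=> //.
  by apply/(Bchar (nextpos_gt L b) (nextpos_gt L b') (nextpos_le h1) (nextpos_le h2) h1 h2
     (cartan_vals (letter L b) (letter L b'))).
case=> h1 h2 h3; split=> //.
by apply/(Bchar (nextpos_gt L b) (nextpos_gt L b') (nextpos_le h1) (nextpos_le h2) h1 h2
     (cartan_vals (letter L b) (letter L b'))).
Qed.


Definition x0 : vtx := (0%N, 0).

Definition Listed (P : vtx -> Prop) (L : seq vtx) :=
  [/\ uniq L, forall x, x \in L <-> P x & sorted (fun a b : vtx => b.2 <= a.2) L].

Definition GapOK (P : vtx -> Prop) (d : nat -> int) :=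
  [/\ (forall k c c', P (k, c) -> P (k, c') -> c' < c -> c' <= c - d k),
      (forall k c c', P (k, c) -> P (k, c') -> c' < c -> P (k, c - d k)) &
      (forall k, 0 < d k)].

Lemma srt P L i j : Listed P L -> (i <= j)%N -> (j < size L)%N ->
  (nth x0 L j).2 <= (nth x0 L i).2.
Proof.
case=> _ _ hs hij hj.
have tr : transitive (fun a b : vtx => b.2 <= a.2).
  by move=> y x z h1 h2; apply: le_trans h2 h1.
have rf : reflexive (fun a b : vtx => b.2 <= a.2) by move=> x; apply: lexx.
by apply: (sorted_leq_nth tr rf x0 hs) => //; rewrite inE; lia.
Qed.

Lemma idx_lt P L u u' : Listed P L -> u \in L -> u' \in L -> u'.2 < u.2 ->
  (index u L < index u' L)%N.
Proof.
move=> hL hu hu' hlt; rewrite ltnNge; apply/negP => hle.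
have := srt hL hle; rewrite !nth_index // index_mem => /(_ hu).
by rewrite leNgt hlt.
Qed.

Lemma idx_le P L u u' : Listed P L -> u \in L -> u' \in L -> (index u L < index u' L)%N ->
  u'.2 <= u.2.
Proof.
move=> hL hu hu' hlt; have := srt hL (ltnW hlt); rewrite !nth_index // index_mem; exact.
Qed.

Lemma find_eq (T : Type) (a : pred T) (y0 : T) s i : (i < size s)%N -> a (nth y0 s i) ->
  (forall i', (i' < i)%N -> ~~ a (nth y0 s i')) -> find a s = i.
Proof.
move=> hi ha hb.
have hh : has a s by apply/(has_nthP y0); exists i.
case: (ltngtP (find a s) i) => // h.
  by have := nth_find y0 hh; rewrite (negbTE (hb _ h)).
by have := before_find y0 h; rewrite ha.
Qed.

Lemma letterE L s : letter L s = (nth x0 L s).1.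
Proof. by []. Qed.

Lemma same_res_below P d L s m : Listed P L -> GapOK P d ->
  (s < m)%N -> (m < size L)%N -> (nth x0 L m).1 = (nth x0 L s).1 ->
  P (nth x0 L m) /\ (nth x0 L m).2 <= (nth x0 L s).2 - d (nth x0 L s).1.
Proof.
move=> hL [g _ _] hsm hm e.
have hL' := hL; case: hL' => u hmem _.
have hs : (s < size L)%N by lia.
have Pz : P (nth x0 L m) by apply/hmem/mem_nth.
have Px : P (nth x0 L s) by apply/hmem/mem_nth.
split=> //.
have hle := srt hL (ltnW hsm) hm.
have hne : nth x0 L m != nth x0 L s by rewrite nth_uniq //; lia.
have hlt : (nth x0 L m).2 < (nth x0 L s).2.
  rewrite lt_neqAle hle andbT; apply: contra hne => /eqP e2.
  by apply/eqP; case: (nth x0 L m) e e2 => a b; case: (nth x0 L s) => a' b' /= -> ->.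
move: Pz Px; case: (nth x0 L m) e hlt => a b; case: (nth x0 L s) => a' b' /= -> hlt Pz Px.
exact: g Px Pz hlt.
Qed.

Lemma nextpos_succ P d L s : Listed P L -> GapOK P d -> (s < size L)%N ->
  P ((nth x0 L s).1, (nth x0 L s).2 - d (nth x0 L s).1) ->
  nextpos L s = index ((nth x0 L s).1, (nth x0 L s).2 - d (nth x0 L s).1) L.
Proof.
move=> hL hG hs hP.
set x := nth x0 L s; set y := (x.1, x.2 - d x.1) in hP *.
have hL' := hL; case: hL' => u hmem _.
have yL : y \in L by apply/hmem.
set j := index y L.
have hj : (j < size L)%N by rewrite index_mem.
have nj : nth x0 L j = y by rewrite nth_index.
have hd : 0 < d x.1 by case: hG.
have hsj : (s < j)%N.
  rewrite ltnNge; apply/negP => hjs.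
  have := srt hL hjs hs; rewrite nj /= -/x; lia.
rewrite /nextpos.
rewrite (@find_eq _ _ x0 _ (j - s.+1)).
- lia.
- rewrite size_drop; lia.
- rewrite nth_drop; have -> : (s.+1 + (j - s.+1))%N = j by lia.
  by rewrite nj letterE -/x.
move=> i' hi'; rewrite nth_drop letterE -/x; apply/negP => /eqP e.
have hm : (s.+1 + i' < size L)%N by lia.
have hsm : (s < s.+1 + i')%N by lia.
have [_ hb] := same_res_below hL hG hsm hm e; rewrite -/x in hb.
have hij : (s.+1 + i' <= j)%N by lia.
have hle2 := srt hL hij hj.
rewrite nj in hle2.
have : nth x0 L (s.+1 + i') = y.
  rewrite /y -/x; move: e hb hle2; case: (nth x0 L (s.+1 + i')) => a b /= -> h1 h2.
  congr (_, _); lia.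
rewrite -nj => e'.
have := nth_uniq x0 hm hj u; rewrite e' eqxx => /esym/eqP; lia.
Qed.

Lemma nextpos_none P d L s : Listed P L -> GapOK P d -> (s < size L)%N ->
  ~ P ((nth x0 L s).1, (nth x0 L s).2 - d (nth x0 L s).1) ->
  nextpos L s = size L.
Proof.
move=> hL hG hs hP; rewrite /nextpos.
set a := (fun x : vtx => x.1 == letter L s).
have hf := find_size a (drop s.+1 L); rewrite size_drop in hf.
case: (ltnP (find a (drop s.+1 L)) (size L - s.+1)) => h; last lia.
exfalso; apply: hP.
have hh : has a (drop s.+1 L) by rewrite has_find size_drop.
have := nth_find x0 hh; rewrite {1}/a nth_drop letterE => /eqP e.
have hm : (s.+1 + find a (drop s.+1 L) < size L)%N by lia.
have hsm : (s < s.+1 + find a (drop s.+1 L))%N by lia.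
have [Pz hb] := same_res_below hL hG hsm hm e.
have Px : P (nth x0 L s) by case: hL => _ hmem _; apply/hmem/mem_nth.
case: hG => _ hc hd.
move: Pz Px hb; case: (nth x0 L (s.+1 + _)) e => a1 b1; case: (nth x0 L s) => a2 b2 /= -> Pz Px hb.
apply: (hc _ _ _ Px Pz); have := hd a2; lia.
Qed.


Definition sc (d : nat -> int) (x : vtx) : vtx := (x.1, x.2 - d x.1).

Definition AdjOK (P : vtx -> Prop) := forall k k' c, P (k, c) -> P (k', c) -> adjb k k' -> False.

Definition Arr (P : vtx -> Prop) d (x y : vtx) :=
  y = sc d x \/ [/\ adjb x.1 y.1, x.2 < y.2, P (sc d y), (sc d y).2 < x.2 &
                  (P (sc d x) -> (sc d x).2 < (sc d y).2)].

Lemma inJe_iff P d L s : Listed P L -> GapOK P d -> (s < size L)%N ->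
  inJe L s <-> P (sc d (nth x0 L s)).
Proof.
move=> hL hG hs; rewrite /inJe /sc; split.
  move=> h; apply: NNPP => hn; move: h; rewrite (nextpos_none hL hG hs hn); lia.
move=> hp; rewrite (nextpos_succ hL hG hs hp) index_mem.
by case: hL => _ hm _; apply/hm.
Qed.

Lemma mem_P P L x : Listed P L -> (x \in L <-> P x).
Proof. by case. Qed.

Lemma Ibar_e_iff P d L n v : Listed P L -> GapOK P d ->
  Ibar_e n L v <-> exists x, [/\ P x, P (sc d x) & relab n x = v].
Proof.
move=> hL hG; split.
  case=> k [hk hJ hv]; exists (nth x0 L k); split => //.
  - by apply/(mem_P _ hL)/mem_nth.
  - by apply/(inJe_iff hL hG hk).
case=> x [Px Ps hv].
have xL : x \in L by apply/(mem_P _ hL).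
exists (index x L); split; first by rewrite index_mem.
  by apply/(inJe_iff hL hG); rewrite ?index_mem // nth_index.
by rewrite /vat nth_index.
Qed.

Lemma Ibar_f_iff P d L n v : Listed P L -> GapOK P d ->
  Ibar_f n L v <-> exists x, [/\ P x, ~ P (sc d x) & relab n x = v].
Proof.
move=> hL hG; split.
  case=> k [hk hJ hv]; exists (nth x0 L k); split => //.
  - by apply/(mem_P _ hL)/mem_nth.
  - by move/(inJe_iff hL hG hk); apply/negP.
case=> x [Px Ps hv].
have xL : x \in L by apply/(mem_P _ hL).
exists (index x L); split; first by rewrite index_mem.
  have hk : (index x L < size L)%N by rewrite index_mem.
  by apply/negP => /(inJe_iff hL hG hk); rewrite nth_index.
by rewrite /vat nth_index.
Qed.

Lemma QB_iff P d L n v w : Listed P L -> GapOK P d -> AdjOK P ->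
  QB n L v w <-> exists x y, [/\ P x, P y, relab n x = v, relab n y = w & Arr P d x y].
Proof.
move=> hL hG hA; have hL' := hL; case: hL' => hu hm hs.
have hd : forall k, 0 < d k by case: hG.
split.
  case=> k [k' [/posArrow_iff [hk hk' hor] hv hw]].
  set x := nth x0 L k in hv hor; set y := nth x0 L k' in hw hor.
  have Px : P x by apply/hm/mem_nth.
  have Py : P y by apply/hm/mem_nth.
  have xL : x \in L by apply/mem_nth.
  have yL : y \in L by apply/mem_nth.
  have ix : index x L = k by rewrite index_uniq.
  have iy : index y L = k' by rewrite index_uniq.
  exists x, y; split => //.
  case: hor => [e|[hc [h1 [h2 h3]]]].
    left.
    have Ps : P (sc d x).
      apply: NNPP => hn; move: hk'; rewrite e (nextpos_none hL hG hk hn); lia.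
    by rewrite /y e (nextpos_succ hL hG hk Ps) nth_index //; apply/hm.
  right.
  have Psy : P (sc d y).
    apply: NNPP => hn; move: h3; rewrite (nextpos_none hL hG hk' hn).
    have := nextpos_le hk; lia.
  have syL : sc d y \in L by apply/hm.
  rewrite (nextpos_succ hL hG hk' Psy) -/y in h2 h3.
  rewrite /letter -/x -/y in hc.
  have ad : adjb x.1 y.1 by apply/cartan_m1.
  have ne : forall u u', P u -> P u' -> adjb u.1 u'.1 -> u.2 != u'.2.
    move=> [a b] [a' b'] /= pu pu' ad'; apply/eqP => e; subst b'.
    exact: (hA a a' b pu pu' ad').
  split => //.
  - have := idx_le hL yL xL; rewrite ix iy => /(_ h1) hle.
    by rewrite lt_neqAle hle andbT; apply: ne.
  - have := idx_le hL xL syL; rewrite ix => /(_ h2) hle.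
    rewrite lt_neqAle hle andbT; rewrite eq_sym; apply: ne => //.
  - move=> Psx; rewrite (nextpos_succ hL hG hk Psx) -/x in h3.
    have sxL : sc d x \in L by apply/hm.
    have := idx_le hL syL sxL h3 => hle.
    by rewrite lt_neqAle hle andbT; apply: ne.
case=> x [y [Px Py hv hw har]].
have xL : x \in L by apply/hm.
have yL : y \in L by apply/hm.
exists (index x L), (index y L); split; last first.
- by rewrite /vat nth_index.
- by rewrite /vat nth_index.
apply/posArrow_iff; rewrite !index_mem; split => //.
have nx : nth x0 L (index x L) = x by rewrite nth_index.
have ny : nth x0 L (index y L) = y by rewrite nth_index.
have hkx : (index x L < size L)%N by rewrite index_mem.
have hky : (index y L < size L)%N by rewrite index_mem.
case: har => [e|[ad h1 Psy h2 h3]].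
  left; have Ps : P (sc d x) by rewrite -e.
  by rewrite (nextpos_succ hL hG hkx) nx // e.
right; rewrite /letter nx ny; split; first by apply/cartan_m1.
have syL : sc d y \in L by apply/hm.
rewrite (nextpos_succ hL hG hky) ny //.
split; first exact: idx_lt hL yL xL h1.
split; first exact: idx_lt hL xL syL h2.
case: (classic (P (sc d x))) => Psx.
  rewrite (nextpos_succ hL hG hkx) nx //.
  by apply: idx_lt hL syL _ (h3 Psx); apply/hm.
by rewrite (nextpos_none hL hG hkx) ?nx // index_mem.
Qed.


Lemma hatI_par n xi a b p p' : Hxi n xi -> hatI n xi a p -> hatI n xi b p' ->
  exists t : int, p - p' = a%:Z - b%:Z + 2 * t.
Proof.
move=> H /hatI_iff [a1 a2 [s hs] _ _] /hatI_iff [b1 b2 [s' hs'] _ _].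
have [t ht] := par H a1 a2 b1 b2; exists (t + s - s'); lia.
Qed.

Lemma phi_hk n k : k <> n -> (1 <= k)%N -> (k <= 2 * n - 1)%N -> phi n (hk n k) = k.
Proof.
move=> h1 h2 h3; rewrite /hk; case: ifP => h; rewrite /phi.
  by have -> : (k <= n.-1)%N by lia.
have -> : (k.-1 <= n.-1)%N = false by lia.
lia.
Qed.

Lemma hk_phi n i : (1 <= i)%N -> (i <= 2 * n - 2)%N -> hk n (phi n i) = i /\ phi n i <> n
   /\ (1 <= phi n i)%N /\ (phi n i <= 2 * n - 1)%N.
Proof.
move=> h1 h2; rewrite /phi; case: ifP => h; rewrite /hk.
  have -> : (i < n)%N by lia. lia.
have -> : (i.+1 < n)%N = false by lia. lia.
Qed.

Lemma TwV_phi n xi fl i p : (2 <= n)%N -> Hxi n xi -> hatI n xi i p -> TwV n xi fl (phi n i, 2 * p).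
Proof.
move=> hn H hI; constructor 1; by exists i, p.
Qed.

Lemma TwV_ne n xi fl k c : (2 <= n)%N -> Hxi n xi -> k <> n ->
  TwV n xi fl (k, c) <-> exists p, c = 2 * p /\ hatI n xi (hk n k) p.
Proof.
move=> hn H kn; rewrite TwV_iff //; split; first by case=> [[_ h]|[h _]].
by move=> h; left.
Qed.

Lemma TwV_n n xi fl c : (2 <= n)%N -> Hxi n xi ->
  TwV n xi fl (n, c) <-> Pn n xi fl c.
Proof.
move=> hn H; rewrite TwV_iff //; split; first by case=> [[h _]|[_ h]].
by move=> h; right.
Qed.

Lemma relabE n k c : relab n (k, c) = (if (k <= n)%N then k else (2 * n - k)%N, c).
Proof. by []. Qed.

Lemma GapOK_Tw n xi fl : (2 <= n)%N -> Hxi n xi -> GapOK (TwV n xi fl) (dd n).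
Proof.
move=> hn H; split.
- by move=> k c c'; apply: P_gap.
- by move=> k c c'; apply: P_contig.
- by move=> k; rewrite /dd; case: ifP.
Qed.

Lemma AdjOK_Tw n xi fl : (2 <= n)%N -> Hxi n xi -> AdjOK (TwV n xi fl).
Proof. by move=> hn H k k' c; apply: P_adj. Qed.


Definition HIe n xi fl L := forall v, Ibar_e n L v <->
  exists x, [/\ TwV n xi fl x, TwV n xi fl (sc (dd n) x) & relab n x = v].
Definition HIf n xi fl L := forall v, Ibar_f n L v <->
  exists x, [/\ TwV n xi fl x, ~ TwV n xi fl (sc (dd n) x) & relab n x = v].

Lemma dd_rB n k : (2 <= n)%N -> (1 <= k)%N -> (k <= 2 * n - 1)%N ->
  dd n k = 2 * rB n (if (k <= n)%N then k else (2 * n - k)%N).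
Proof.
move=> hn h1 h2; rewrite /dd /rB.
case: leqP => h; repeat (case: ifP => [/eqP ?|/eqP ?] || case: ifP => ?); lia.
Qed.

Lemma ee01 fl : ee fl = 0 \/ ee fl = 1.
Proof. by case: fl; [right|left]. Qed.

Lemma Ibar_of n xi fl x : TwV n xi fl x -> Ibar n xi fl (relab n x).
Proof. by move=> h; exists x. Qed.

Lemma QB_Expl n xi fl L x y : (2 <= n)%N -> Hxi n xi -> HIe n xi fl L ->
  TwV n xi fl x -> TwV n xi fl y -> Arr (TwV n xi fl) (dd n) x y ->
  ExplicitArrows n L xi fl (relab n x) (relab n y).
Proof.
move=> hn H hIe; move: x y => [k c] [k' c'] Px Py.
have [r1 r2] := P_res hn H Px; have [r1' r2'] := P_res hn H Py.
case=> [e|[ad h1 Psy h2 h3]].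
  case: e => ? ?; subst k' c'.
  constructor 1; split.
  - by [].
  - by rewrite /= (dd_rB hn r1 r2).
  - exact: Ibar_of.
  - exact: Ibar_of.
have Ie : Ibar_e n L (relab n (k', c')) by apply/hIe; exists (k', c').
move: ad h1 h2 h3 Psy Ie; rewrite /sc /= => /orP ad h1 h2 h3 Psy Ie.
have ad' : k = k'.+1 \/ k' = k.+1 by case: ad => /eqP; tauto.
case: (k =P n) => kn; case: (k' =P n) => kn'.
- lia.
- subst k; move: (Px) (Py); rewrite TwV_n // TwV_ne // => [[q [eq hq]]] [p' [ep' hI']].
  have ed : dd n k' = 4 by rewrite /dd; case: eqP.
  rewrite ed in h2 h3.
  have [hc'|hc'] : c' = c + 3 \/ c' = c + 1 by lia.
    constructor 4; rewrite !relabE; split => //=.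
    + by rewrite leqnn.
    + rewrite hc'; congr (_, _); case: ifP; lia.
    + exact: (Ibar_of Px).
  exfalso.
  have hd : dd n n = 2 by rewrite /dd eqxx.
  rewrite hd in h3.
  have nP : ~ TwV n xi fl (n, c - 2) by move=> /h3; lia.
  apply: nP; rewrite TwV_n //.
  move: Psy; rewrite TwV_ne // => [[p'' [e'' hI'']]].
  have hk' : hk n k' = n.-1 \/ hk n k' = n by rewrite /hk; case: ifP; lia.
  have hm : midS n xi p''. by rewrite /midS; case: hk' => e; rewrite e in hI''; tauto.
  move/(midS_iff _ hn H): hm => hm.
  exists (q - 1); have := ee01 fl; rewrite /hh in hm *; lia.
- subst k'; move: (Px) (Py); rewrite TwV_ne // TwV_n // => [[p [ep hI]]] [q [eq hq]].
  have hd : dd n n = 2 by rewrite /dd eqxx.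
  rewrite hd in h2.
  constructor 3; rewrite !relabE; split => //=.
  + case: ifP; lia.
  + rewrite leqnn; congr (_, _); lia.
  + exact: (Ibar_of Px).
- move: (Px) (Py); rewrite !TwV_ne // => [[p [ep hI]]] [p' [ep' hI']].
  have ed : dd n k' = 4 by rewrite /dd; case: eqP.
  have ed2 : dd n k = 4 by rewrite /dd; case: eqP.
  rewrite ed in h2; rewrite ed2 in h3.
  have [t ht] := hatI_par H hI hI'.
  have sides : ((k < n)%N /\ (k' < n)%N) \/ ((n < k)%N /\ (n < k')%N) by lia.
  have ehk : hk n k = (if (k < n)%N then k else k.-1) by [].
  have ehk' : hk n k' = (if (k' < n)%N then k' else k'.-1) by [].
  case: sides => [[s1 s2]|[s1 s2]].
    rewrite s1 in ehk; rewrite s2 in ehk'; rewrite ehk ehk' in ht.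
    constructor 2; rewrite !relabE; split => //=.
    + have -> : (k <= n)%N by lia. have -> : (k' <= n)%N by lia. lia.
    + have -> : (k <= n)%N by lia. have -> : (k' <= n)%N by lia. lia.
    + lia.
    + exact: (Ibar_of Px).
  have s1' : (k < n)%N = false by lia. have s2' : (k' < n)%N = false by lia.
  rewrite s1' in ehk; rewrite s2' in ehk'; rewrite ehk ehk' in ht.
  constructor 2; rewrite !relabE; split => //=.
  + have -> : (k <= n)%N = false by lia. have -> : (k' <= n)%N = false by lia. lia.
  + have -> : (k <= n)%N = false by lia. have -> : (k' <= n)%N = false by lia. lia.
  + lia.
  + exact: (Ibar_of Px).
Qed.

Lemma Expl_QB n xi fl L v w : (2 <= n)%N -> Hxi n xi -> HIe n xi fl L ->
  ExplicitArrows n L xi fl v w ->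
  exists x y, [/\ TwV n xi fl x, TwV n xi fl y, relab n x = v, relab n y = w &
                  Arr (TwV n xi fl) (dd n) x y].
Proof.
move=> hn H hIe.
have dn : dd n n = 2 by rewrite /dd eqxx.
have dk : forall k, k <> n -> dd n k = 4 by move=> k kn; rewrite /dd; case: eqP.
case.
- case=> e1 e2 [[k c] [Px hv]] [[k' c'] [Py hw]].
  exists (k, c), (k', c'); split => //; left.
  have [r1 r2] := P_res hn H Px; have [r1' r2'] := P_res hn H Py.
  move: e1 e2; rewrite -hv -hw !relabE /= -(dd_rB hn r1 r2) /sc /= => e1 e2.
  have kk : k = k'.
    case: (k =P k') => // kk; exfalso.
    have kn : k <> n by move: e1; case: ifP; case: ifP; lia.
    have kn' : k' <> n by move: e1; case: ifP; case: ifP; lia.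
    move: Px Py; rewrite !TwV_ne // => [[p [ep hI]]] [p' [ep' hI']].
    have [t ht] := hatI_par H hI hI'.
    move: ht e1 e2; rewrite (dk _ kn) /hk; repeat (case: ifP => ?); lia.
  subst k'; congr (_, _); lia.
- case=> [[a1 a2] a3 a4 [[k c] [Px hv]] /hIe [[k' c'] [Py Psy hw]]].
  exists (k, c), (k', c'); split => //; right.
  have [r1 r2] := P_res hn H Px; have [r1' r2'] := P_res hn H Py.
  move: a1 a2 a3 a4; rewrite -hv -hw !relabE /= => a1 a2 a3 a4.
  have kn : k <> n by move: a1; case: ifP; lia.
  have kn' : k' <> n by move: a2; case: ifP; lia.
  move: (Px) (Py); rewrite !TwV_ne // => [[p [ep hI]]] [p' [ep' hI']].
  have [t ht] := hatI_par H hI hI'.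
  move: Psy; rewrite /sc /= (dk _ kn) (dk _ kn') => Psy.
  split; [|lia|done|lia|move=> _; lia].
  have [?|?] : k = k'.+1 \/ k' = k.+1.
    by move: ht a1 a2 a3; rewrite /hk; repeat (case: ifP => ?); lia.
  * by apply/orP; left; apply/eqP.
  * by apply/orP; right; apply/eqP.
- case=> a1 a2 [[k c] [Px hv]] /hIe [[k' c'] [Py Psy hw]].
  exists (k, c), (k', c'); split => //; right.
  have [r1 r2] := P_res hn H Px; have [r1' r2'] := P_res hn H Py.
  move: a1 a2; rewrite -hv -hw !relabE /= => a1 [a2 a3].
  have kn : k <> n by move: a1; case: ifP; lia.
  have kn' : k' = n by move: a2; case: ifP; lia.
  subst k'; move: Psy; rewrite /sc /= (dk _ kn) dn => Psy.
  split; [|lia|done|lia|move=> _; lia].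
  have [?|?] : k = n.+1 \/ n = k.+1 by move: a1; case: ifP => ? ?; lia.
  * by apply/orP; left; apply/eqP.
  * by apply/orP; right; apply/eqP.
- case=> a1 a2 [[k c] [Px hv]] /hIe [[k' c'] [Py Psy hw]].
  exists (k, c), (k', c'); split => //; right.
  have [r1 r2] := P_res hn H Px; have [r1' r2'] := P_res hn H Py.
  move: a1 a2; rewrite -hv -hw !relabE /= => a1 [a2 a3].
  have kn : k = n by move: a1; case: ifP; lia.
  have kn' : k' <> n by move: a2; case: ifP; lia.
  subst k; move: Psy; rewrite /sc /= (dk _ kn') dn => Psy.
  split; [|lia|done|lia|move=> _; lia].
  have [?|?] : n = k'.+1 \/ k' = n.+1 by move: a2; case: ifP => ? ?; lia.
  * by apply/orP; left; apply/eqP.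
  * by apply/orP; right; apply/eqP.
Qed.


Lemma Ie_x n xi fl L x : (2 <= n)%N -> Hxi n xi -> HIe n xi fl L -> TwV n xi fl x ->
  Ibar_e n L (relab n x) <-> TwV n xi fl (sc (dd n) x).
Proof.
move=> hn H hIe Px; rewrite hIe; split; last by move=> h; exists x.
case=> x' [Px' Ps e]; have := P_relab hn H Px' Px e; by move=> <-.
Qed.

Lemma If_x n xi fl L x : (2 <= n)%N -> Hxi n xi -> HIf n xi fl L -> TwV n xi fl x ->
  Ibar_f n L (relab n x) <-> ~ TwV n xi fl (sc (dd n) x).
Proof.
move=> hn H hIf Px; rewrite hIf; split; last by move=> h; exists x.
case=> x' [Px' Ps e]; have := P_relab hn H Px' Px e; by move=> <-.
Qed.

Lemma L3 n xi j i p : (2 <= n)%N -> Hxi n xi -> hatI n xi j (p - 1) -> hatI n xi i p ->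
  (i = j.+1 \/ j = i.+1) -> hatI n xi j (p - 3) -> hatI n xi i (p - 2).
Proof.
move=> hn H hj hi ad hj3.
move: hi hj3 => /hatI_iff [i1 i2 [s hs] i4 i5] /hatI_iff [j1 j2 [s' hs'] j4 j5].
apply/hatI_iff; split => //; first by exists (s - 1); lia.
- case: ad => e.
  + have e1 : (2 * n - 1 - j)%N = (2 * n - 1 - i).+1 by lia.
    rewrite e1 in j4; have := adjx H (i := (2 * n - 1 - i)%N) ltac:(lia) ltac:(lia); lia.
  + have e1 : (2 * n - 1 - i)%N = (2 * n - 1 - j).+1 by lia.
    rewrite e1; have := adjx H (i := (2 * n - 1 - j)%N) ltac:(lia) ltac:(lia); lia.
- lia.
Qed.

Lemma Arr_TwA n xi fl x y : (2 <= n)%N -> Hxi n xi ->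
  TwV n xi fl x -> TwV n xi fl y -> x.1 <> n ->
  [/\ adjb x.1 y.1, x.2 < y.2, TwV n xi fl (sc (dd n) y), (sc (dd n) y).2 < x.2 &
      (TwV n xi fl (sc (dd n) x) -> (sc (dd n) x).2 < (sc (dd n) y).2)] ->
  TwA n xi fl x y.
Proof.
move=> hn H; move: x y => [k c] [k' c'] Px Py /= kn [ad h1 Psy h2 h3].
have dn : dd n n = 2 by rewrite /dd eqxx.
have dk : forall k, k <> n -> dd n k = 4 by move=> k0 kn0; rewrite /dd; case: eqP.
have [r1 r2] := P_res hn H Px; have [r1' r2'] := P_res hn H Py.
have ad' : k = k'.+1 \/ k' = k.+1 by move/orP: ad => [/eqP|/eqP]; tauto.
move: (Px); rewrite TwV_ne // => [[p [ep hI]]].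
move: h2 h3; rewrite /sc /= => h2 h3.
case: (k' =P n) => kn'.
- subst k'; rewrite dn in h2.
  move: (Py); rewrite TwV_n // => [[q [eq hq]]].
  have eqp : q = p by lia.
  subst q.
  have hk2 : hk n k = n.-1 \/ hk n k = n by rewrite /hk; case: ifP; lia.
  have hm : midS n xi p by rewrite /midS; case: hk2 => e; rewrite e in hI; tauto.
  move/(midS_iff _ hn H): hm => hm.
  have [hp|hp] : p <= Mx n xi - 1 \/ (p = Mx n xi /\ ee fl = 1).
    by have := ee01 fl; lia.
  + constructor 2.
    have [j' [i' [hG hmp]]] := @mid_of n xi p hn H ltac:(by apply/(midS_iff _ hn H); lia)
       ltac:(by apply/(midS_iff _ hn H); lia).
    have ej : j' = hk n k.
      case: hG => _ _ hj _.
      have [t ht] := hatI_par H hj hI.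
      case: hmp => [[? ?]|[? ?]]; subst; case: hk2 => e; rewrite e in ht *; lia.
    exists j', p, i', (p + 1); split => //.
    rewrite ej (phi_hk kn r1 r2); left; split => //; congr (_, _); lia.
  + case: hp => hp efl; destruct fl; last by rewrite /ee in efl.
    constructor 3.
    exists (Mx n xi); split.
    * by apply/isMax_iff.
    * by exists (hk n k), p; rewrite (phi_hk kn r1 r2) ep.
    * rewrite /=; lia.
    * by rewrite /= ep hp.
    * by congr (_, _); lia.
- rewrite (dk _ kn') in h2.
  move: (Py); rewrite TwV_ne // => [[p' [ep' hI']]].
  have [t ht] := hatI_par H hI hI'.
  have sides : ((k < n)%N /\ (k' < n)%N) \/ ((n < k)%N /\ (n < k')%N) by lia.
  have [ej ej'] : hk n k = (if (k < n)%N then k else k.-1) /\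
                  hk n k' = (if (k' < n)%N then k' else k'.-1) by [].
  have [adh nm] : (hk n k' = (hk n k).+1 \/ hk n k = (hk n k').+1) /\ ~ midpair n (hk n k') (hk n k).
    rewrite /midpair ej ej'; case: sides => [[s1 s2]|[s1 s2]]; rewrite ?s1 ?s2; first lia.
    have -> : (k < n)%N = false by lia. have -> : (k' < n)%N = false by lia.
    lia.
  constructor 1.
  exists (hk n k), p, (hk n k'), p'; split => //.
  + split => //; lia.
  + by rewrite (phi_hk kn r1 r2) ep.
  + by rewrite (phi_hk kn' r1' r2') ep'.
Qed.

Lemma Arr_notff n xi fl L x y : (2 <= n)%N -> Hxi n xi -> HIf n xi fl L ->
  TwV n xi fl x -> TwV n xi fl y -> Arr (TwV n xi fl) (dd n) x y ->
  ~ (Ibar_f n L (relab n x) /\ Ibar_f n L (relab n y)).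
Proof.
move=> hn H hIf Px Py [e|[_ _ Psy _ _]] [f1 f2].
  by move/(If_x hn H hIf Px): f1; rewrite -e.
by move/(If_x hn H hIf Py): f2.
Qed.

Lemma relab1 n k : (1 <= k)%N -> (k <= 2 * n - 1)%N ->
  ((relab n (k, 0)).1 = n <-> k = n).
Proof. rewrite relabE /=; case: ifP; lia. Qed.

Lemma QB_Mod n xi fl L x y : (2 <= n)%N -> Hxi n xi -> HIe n xi fl L -> HIf n xi fl L ->
  TwV n xi fl x -> TwV n xi fl y -> Arr (TwV n xi fl) (dd n) x y ->
  ModifiedArrows n L xi fl (relab n x) (relab n y).
Proof.
move=> hn H hIe hIf Px Py har; split; last exact: Arr_notff hn H hIf Px Py har.
have hE := QB_Expl hn H hIe Px Py har.
move: x y Px Py har hE => [k c] [k' c'] Px Py har hE.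
have [r1 r2] := P_res hn H Px; have [r1' r2'] := P_res hn H Py.
have fx : (relab n (k, c)).1 = (relab n (k, 0)).1 by [].
have fy : (relab n (k', c')).1 = (relab n (k', 0)).1 by [].
case: har => [e|[ad h1 Psy h2 h3]].
  case: e => ? ?; subst k' c'.
  left; split.
    right; case: hE => // [[_ a2 _ _ _]|[a1 a2 _ _]|[a1 a2 _ _]]; exfalso.
    - by move: a2; rewrite !relabE /=; lia.
    - by case: a2 => a2 _; move: a1 a2; rewrite !relabE /=; lia.
    - by case: a2 => a2 _; move: a1 a2; rewrite !relabE /=; lia.
  rewrite /formB2 => [[a1 a2]]; case: a2 => a2 _; move: a1 a2; rewrite !relabE /=; lia.
have ad' : k = k'.+1 \/ k' = k.+1 by move/orP: ad => [/eqP|/eqP]; tauto.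
case: (k =P n) => kn.
  subst k; right; case: hE => // [[a1 _ _ _]|[[a1 _] _ _ _ _]|[a1 _ _ _]]; exfalso; move: a1; rewrite !relabE /=;
    rewrite leqnn; try (case: ifP); lia.
left; split.
  left; exists (k, c), (k', c'); split => //.
  by apply: Arr_TwA => //; split.
rewrite /formB2 => [[a1 _]]; move: a1; rewrite relabE /=; case: ifP; lia.
Qed.

Lemma Mod_QB n xi fl L v w : (2 <= n)%N -> Hxi n xi -> HIe n xi fl L -> HIf n xi fl L ->
  ModifiedArrows n L xi fl v w ->
  exists x y, [/\ TwV n xi fl x, TwV n xi fl y, relab n x = v, relab n y = w &
                  Arr (TwV n xi fl) (dd n) x y].
Proof.
move=> hn H hIe hIf.
have dn : dd n n = 2 by rewrite /dd eqxx.
have dk : forall k, k <> n -> dd n k = 4 by move=> k0 kn0; rewrite /dd; case: eqP.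
case=> hX nff; case: hX => [[[hU|hB1] nB2]|hB3]; last first.
- by apply: Expl_QB => //; constructor 4.
- by apply: Expl_QB => //; constructor 1.
case: hU => x [y [hT hv hw]]; subst v w.
case: hT.
- case=> j [q [i [p [[eq ad hj hi] nm ex ey]]]]; subst x y q.
  have Px := TwV_phi fl hn H hj; have Py := TwV_phi fl hn H hi.
  have [ja jb] := hatI_range hj; have [ia ib] := hatI_range hi.
  have [hj1 [hj2 [hj3 hj4]]] := hk_phi ja jb.
  have [hi1 [hi2 [hi3 hi4]]] := hk_phi ia ib.
  have sides : ((j < n)%N /\ (i < n)%N) \/ ((n <= j)%N /\ (n <= i)%N).
    by rewrite /midpair in nm; lia.
  have [ej ei] : phi n j = (if (j <= n.-1)%N then j else j.+1) /\
                 phi n i = (if (i <= n.-1)%N then i else i.+1) by [].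
  have Psy : TwV n xi fl (sc (dd n) (phi n i, 2 * p)).
    apply: NNPP => hnot.
    case: (classic (Ibar_f n L (relab n (phi n j, 2 * (p - 1))))) => fx.
      by apply: nff; split => //; apply/(If_x hn H hIf Py).
    have Psx : TwV n xi fl (sc (dd n) (phi n j, 2 * (p - 1))).
      by apply: NNPP => h; apply: fx; apply/(If_x hn H hIf Px).
    move: Psx; rewrite /sc /= (dk _ hj2) TwV_ne // hj1 => [[p'' [e'' h'']]].
    have hj3' : hatI n xi j (p - 3) by move: h''; congr (hatI _ _ _ _); lia.
    have := L3 hn H hj hi ad hj3'.
    move=> /(TwV_phi fl hn H) h; apply: hnot; rewrite /sc /= (dk _ hi2).
    by move: h; congr (TwV _ _ _ (_, _)); lia.
  exists (phi n j, 2 * (p - 1)), (phi n i, 2 * p); split => //; right.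
  move: Psy; rewrite /sc /= (dk _ hj2) (dk _ hi2) => Psy.
  split; [|lia|done|lia|move=> _; lia].
  apply/orP; rewrite ej ei; case: sides => [[s1 s2]|[s1 s2]].
    have -> : (j <= n.-1)%N by lia. have -> : (i <= n.-1)%N by lia.
    by case: ad => ->; [right|left].
  have -> : (j <= n.-1)%N = false by lia. have -> : (i <= n.-1)%N = false by lia.
  by case: ad => ->; [right|left].
- case=> j [q [i [p [[eq ad hj hi] hm [[ex ey]|[ex ey]]]]]]; subst x y q; last first.
    exfalso; apply: nB2; rewrite /formB2 !relabE /=; rewrite leqnn; split => //.
    have [ia ib] := hatI_range hi.
    congr (_, _); last lia.
    by case: hm => [[? ?]|[? ?]]; subst; rewrite /phi; case: ifP; case: ifP; lia.
  have Px := TwV_phi fl hn H hj.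
  have [ja jb] := hatI_range hj.
  have [hj1 [hj2 [hj3 hj4]]] := hk_phi ja jb.
  have Py : TwV n xi fl (n, 2 * p - 1) by constructor 2; exists j, i, p.
  have [/(midS_iff _ hn H) m1 /(midS_iff _ hn H) m2] := midpair_mid hn H (And4 erefl ad hj hi) hm.
  have jj : j = n.-1 \/ j = n by case: hm => [[? ?]|[? ?]]; lia.
  have Psy : TwV n xi fl (sc (dd n) (n, 2 * p - 1)).
    apply: NNPP => hnot.
    case: (classic (Ibar_f n L (relab n (phi n j, 2 * (p - 1))))) => fx.
      by apply: nff; split => //; apply/(If_x hn H hIf Py).
    have Psx : TwV n xi fl (sc (dd n) (phi n j, 2 * (p - 1))).
      by apply: NNPP => h; apply: fx; apply/(If_x hn H hIf Px).
    move: Psx; rewrite /sc /= (dk _ hj2) TwV_ne // hj1 => [[p'' [e'' h'']]].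
    have m3 : midS n xi p'' by rewrite /midS; case: jj => e; rewrite e in h''; tauto.
    move/(midS_iff _ hn H): m3 => m3.
    apply: hnot; rewrite /sc /= dn TwV_n //.
    exists (p - 2); have := ee01 fl; rewrite /hh in m1 m2 m3 *; lia.
  exists (phi n j, 2 * (p - 1)), (n, 2 * p - 1); split => //; right.
  move: Psy; rewrite /sc /= (dk _ hj2) dn => Psy.
  split; [|lia|done|lia|move=> _; lia].
  apply/orP; rewrite /phi; case: jj => ->.
    rewrite leqnn; right; apply/eqP; lia.
  have -> : (n <= n.-1)%N = false by lia. by left; apply/eqP.
- destruct fl.
  + case=> r [/(isMax_iff _ hn H) -> hx hx1 hx2 ey]; subst y.
    have Px : TwV n xi FlatGt x by constructor 1.
    move: x Px hx hx1 hx2 nff nB2 => [k c] Px hx /= hx1 hx2 nff nB2; subst c.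
    have kn : k <> n by lia.
    have Py : TwV n xi FlatGt (n, 2 * Mx n xi + 1).
      by rewrite TwV_n //; exists (Mx n xi); rewrite /ee /hh; lia.
    have Psy : TwV n xi FlatGt (sc (dd n) (n, 2 * Mx n xi + 1)).
      by rewrite /sc /= dn TwV_n //; exists (Mx n xi - 1); rewrite /ee /hh; lia.
    exists (k, 2 * Mx n xi), (n, 2 * Mx n xi + 1); split => //; right.
    move: Psy; rewrite /sc /= (dk _ kn) dn => Psy.
    split; [|lia|done|lia|move=> _; lia].
    by apply/orP; case: hx1 => ->; [right|left]; apply/eqP; lia.
  + case=> r [_ hy hy1 hy2 ex]; subst x; exfalso; clear nff; apply: nB2.
    move: y hy hy1 hy2 => [k c] hy /= hy1 hy2; subst c.
    rewrite /formB2 !relabE /= leqnn; split => //.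
    congr (_, _); last lia.
    by case: hy1 => ->; case: ifP; lia.
Qed.


Lemma bnd1 n xi : Hxi n xi -> forall i, (1 <= i)%N -> (i <= 2 * n - 2)%N ->
  xi 1%N - (i%:Z - 1) <= xi i /\ xi i <= xi 1%N + (i%:Z - 1).
Proof.
move=> H; elim=> [//|i IH] _ hi.
case: (posnP i) => [->|ip]. lia.
have := IH ip (ltnW hi); case: (H i ip hi); lia.
Qed.

Lemma TwV_bound n xi fl k c : (2 <= n)%N -> Hxi n xi -> TwV n xi fl (k, c) ->
  [/\ (1 <= k)%N, (k <= 2 * n - 1)%N, 2 * xi 1%N - 10 * n%:Z <= c & c <= 2 * xi 1%N + 10 * n%:Z].
Proof.
move=> hn H hP; have [r1 r2] := P_res hn H hP; split => //.
all: move: hP; rewrite TwV_iff //; case=> [[kn [p [-> /hatI_iff [a1 a2 _ a4 a5]]]]|[_ [q [-> [q1 q2]]]]].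
all: try (have := bnd1 H a1 a2; have := bnd1 H (i := (2 * n - 1 - hk n k)%N) ltac:(lia) ltac:(lia); lia).
all: have := ee01 fl; have := Mx_cases hn H; have := bnd1 H (i := n) ltac:(lia) ltac:(lia);
     have := bnd1 H (i := n.-1) ltac:(lia) ltac:(lia); rewrite /hh in q1 q2; lia.
Qed.

Definition cand n (xi : nat -> int) : seq vtx :=
  [seq (k, c) | k <- iota 0 (2 * n), c <- [seq 2 * xi 1%N - 10 * n%:Z + j%:Z | j <- iota 0 (20 * n + 1)]].

Definition Pb (P : vtx -> Prop) (v : vtx) : bool :=
  if excluded_middle_informative (P v) then true else false.

Lemma PbP (P : vtx -> Prop) v : Pb P v <-> P v.
Proof. rewrite /Pb; case: excluded_middle_informative => //. Qed.

Lemma listing_exists n xi fl : (2 <= n)%N -> Hxi n xi -> exists L, IsListing n xi fl L.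
Proof.
move=> hn H.
set R := fun a b : vtx => b.2 <= a.2.
exists (sort R (undup (filter (Pb (TwV n xi fl)) (cand n xi)))); split.
- by rewrite sort_uniq undup_uniq.
- move=> x; rewrite mem_sort mem_undup mem_filter; split.
    by case/andP => /PbP.
  move=> hx; apply/andP; split; first by apply/PbP.
  move: hx; case: x => k c hx.
  have [r1 r2 b1 b2] := TwV_bound hn H hx.
  apply: allpairs_f; first by rewrite mem_iota; lia.
  apply/mapP; exists (absz (c - (2 * xi 1%N - 10 * n%:Z))%R); last lia.
  rewrite mem_iota; lia.
- apply: sort_sorted => a b; rewrite /R; apply: le_total.
Qed.

Unset Implicit Arguments.

Theorem proposition6p1 (n : nat) (hn : (2 <= n)%N)
  (xi : nat -> int) (orient : nat -> bool)
  (hxi : forall i : nat, (1 <= i)%N -> (i < 2 * n - 2)%N ->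
           if orient i then xi i.+1 = xi i + 1 else xi i = xi i.+1 + 1)
  (fl : flat) :
  (exists L : seq vtx, IsListing n xi fl L) /\
  forall L : seq vtx, IsListing n xi fl L ->
    forall v w : vtx,
      (QB n L v w <-> ModifiedArrows n L xi fl v w) /\
      (QB n L v w <-> ExplicitArrows n L xi fl v w).
Proof.
have H := Hxi_of hxi.
split; first exact: listing_exists.
move=> L hL v w.
have hL' : Listed (TwV n xi fl) L := hL.
have hG := @GapOK_Tw n xi fl hn H.
have hA := @AdjOK_Tw n xi fl hn H.
have hIe : HIe n xi fl L by move=> u; exact: Ibar_e_iff hL' hG.
have hIf : HIf n xi fl L by move=> u; exact: Ibar_f_iff hL' hG.
rewrite (QB_iff _ _ _ hL' hG hA); split; split.
- by case=> x [y [Px Py <- <- har]]; apply: QB_Mod.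
- by move=> hM; apply: Mod_QB.
- by case=> x [y [Px Py <- <- har]]; apply: QB_Expl.
- by move=> hE; apply: Expl_QB.
Qed.
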